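(* Let $n \in \mathbb{Z}^+$, let $R : H_K \to H_L$ be a homomorphism of commutative groups, and let $S \subset H_K[n]$ be a subset. (a) If $\operatorname{Ker} R = 0$, then $\# R(S) = \# S$, and for each $r \in \mathbb{Z}^+$, $S$ is $r$-LI over $\mathbb{Z}/n\mathbb{Z}$ if and only if $R(S)$ is $r$-LI over $\mathbb{Z}/n\mathbb{Z}$. (b) Suppose $\operatorname{Ker} R$ is finite and $S$ is infinite and $2$-LI over $\mathbb{Z}/n\mathbb{Z}$. Then there is a subset $S' \subset S$ such that $R(S')$ is an infinite subset of $H_L$ which is $1$-LI over $\mathbb{Z}/n\mathbb{Z}$.
   Context: For a commutative group $H$, $H[n]$ denotes its $n$-torsion subgroup. For $S \subset H[n]$ and $r \in \mathbb{Z}^+$, $S$ is $r$-LI over $\mathbb{Z}/n\mathbb{Z}$ if every $r$-element subset $\{\eta_1,\dots,\eta_r\} \subset S$ is linearly independent over $\mathbb{Z}/n\mathbb{Z}$: whenever $a_1\eta_1 + \dots + a_r\eta_r = 0$ with $a_i \in \mathbb{Z}$, we have $a_1 \equiv \dots \equiv a_r \equiv 0 \pmod n$. In particular $S$ is $1$-LI iff every element of $S$ has order exactly $n$. *)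

(* Defs.v *)
From HB Require Import structures.
From mathcomp Require Import all_boot all_order all_algebra.
From mathcomp Require Export classical_sets cardinality.
Set Implicit Arguments. Unset Strict Implicit. Unset Printing Implicit Defensive.
Import GRing.Theory.
Local Open Scope ring_scope.

Definition torsion (H : zmodType) (n : nat) : set H := [set x | x *+ n = 0].

(* S is r-LI over Z/nZ: every r-element subset {eta_1,..,eta_r} of S
   (i.e. r pairwise distinct elements of S) is linearly independent over Z/nZ *)
Definition rLI (H : zmodType) (n r : nat) (S : set H) : Prop :=
  forall eta : 'I_r -> H, injective eta -> (forall i, S (eta i)) ->
  forall a : 'I_r -> int, \sum_(i < r) eta i *~ a i = 0 ->
  forall i, (n%:Z %| a i)%Z.

(* Main.v *)
Require Import Defs.
From HB Require Import structures.
From mathcomp Require Import all_boot all_order all_algebra.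
From mathcomp Require Import boolp classical_sets cardinality.
From mathcomp Require Import zify.
From Stdlib Require Import Lia.
Local Open Scope classical_set_scope.
Local Open Scope card_scope.
Local Open Scope ring_scope.
Import GRing.Theory Num.Theory.

Lemma two_LI (n : nat) (H : zmodType) (S : set H) (x y : H) :
  rLI n 2 S -> S x -> S y -> x <> y -> forall a b : int,
  x *~ a + y *~ b = 0 -> (n%:Z %| a)%Z.
Proof.
move=> h Sx Sy xy a b e.
pose eta := fun i : 'I_2 => if i == ord0 then x else y.
pose A := fun i : 'I_2 => if i == ord0 then a else b.
have inj : injective eta.
  move=> i j; rewrite /eta.
  case: i => [[|[|i]] Hi] //; case: j => [[|[|j]] Hj] //=;
    try (by move=> e1; exfalso; apply: xy); try (by move=> e1; exfalso; apply: xy; rewrite e1);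
    by move=> _; apply/val_inj.
apply: (h eta inj _ A _ ord0).
  by move=> i; rewrite /eta; case: (i == ord0).
by rewrite big_ord_recl big_ord1.
Qed.

Theorem lemma2p2 (n : nat) (hn : (0 < n)%N) (HK HL : zmodType)
    (R : {additive HK -> HL}) (S : set HK) (hS : S `<=` @torsion HK n) :
  ((forall x, R x = 0 -> x = 0) ->
     (S #= (R @` S)) /\
     (forall r : nat, (0 < r)%N -> (rLI n r S <-> rLI n r (R @` S))))
  /\
  (finite_set [set x | R x = 0] -> infinite_set S -> rLI n 2 S ->
     exists S' : set HK, S' `<=` S /\
       infinite_set (R @` S') /\ rLI n 1 (R @` S')).
Proof.
split.
  move=> Rinj.
  have Ri : injective R.
    by move=> x y e; apply/eqP; rewrite -subr_eq0; apply/eqP/Rinj; rewrite raddfB e subrr.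
  split.
    by apply: card_esym; apply: inj_card_eq => x y _ _; apply: Ri.
  move=> r _; split.
    move=> h eta einj eS a e i.
    have : forall j, exists x, S x /\ R x = eta j.
      by move=> j; case: (eS j) => x Sx <-; exists x.
    case/choice => xi hxi.
    apply: (h xi) => //.
    - by move=> j k ejk; apply: einj; rewrite -(hxi j).2 -(hxi k).2 ejk.
    - by move=> j; case: (hxi j).
    - apply: Ri; rewrite raddf0 raddf_sum -[RHS]e; apply: eq_bigr => j _.
      by rewrite raddfMz (hxi j).2.
  move=> h eta einj eS a e i.
  apply: (h (R \o eta)) => //.
  - by move=> j k /Ri /einj.
  - by move=> j; exists (eta j).
  - have -> : \sum_(j < r) (R \o eta) j *~ a j = R (\sum_(j < r) eta j *~ a j).
      by rewrite raddf_sum; apply: eq_bigr => j _; rewrite raddfMz.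
    by rewrite e raddf0.
move=> finK infS h2.
pose Bad_d (d : nat) := [set x | S x /\ (0 < d)%N /\ R (x *+ d) = 0].
pose Bad := \bigcup_(d in `I_n) Bad_d d.
have finBad : finite_set Bad.
  apply: bigcup_finite; first exact: finite_II.
  move=> d dn.
  have injd : {in Bad_d d &, injective (fun x : HK => x *+ d)}.
    move=> x y; rewrite !in_setE => -[Sx [d0 _]] [Sy _] e.
    apply: contrapT => xy.
    have := @two_LI n HK S x y h2 Sx Sy xy d%:Z (- d%:Z).
    rewrite mulrNz -!pmulrn e subrr => /(_ erefl).
    rewrite dvdzE /= => /dvdn_leq => /(_ d0); move: dn => /=; lia.
  rewrite -(eq_finite_set (inj_card_eq injd)).
  apply: sub_finite_set finK => _ [x [_ [_ e]] <-]; exact: e.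
exists (S `\` Bad); split; first by move=> x [].
split.
  move=> finI.
  have infD : infinite_set (S `\` Bad) by apply: infinite_setD.
  apply: infD.
  apply: (sub_finite_set (B := \bigcup_(y in R @` (S `\` Bad)) (R @^-1` [set y]
              `&` (S `\` Bad)))).
    by move=> x Sx; exists (R x) => //; exists x.
  apply: bigcup_finite => // _ [x0 Sx0 <-].
  apply: (sub_finite_set (B := (fun k => x0 + k) @` [set x | R x = 0])).
    move=> x [/= ex _]; exists (x - x0); first by rewrite /= raddfB ex subrr.
    by rewrite addrC subrK.
  exact: finite_image.
move=> eta _ eS a e i.
have [x [Sx nB] ex] := eS ord0.
have i0 : i = ord0 by apply/val_inj; case: i => [[|]].
rewrite i0; move: e; rewrite big_ord1 -ex.
set a0 := a ord0 => e.
apply/dvdz_mod0P.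
have n0 : n%:Z != 0 by case: (n) hn.
have yn : R x *+ n = 0 by rewrite -raddfMn (hS _ Sx) raddf0.
have npos : 0 < n%:Z by rewrite ltz_nat.
have := modz_ge0 a0 n0; have := ltz_pmod a0 npos.
have z : R x *~ ((a0 %/ n%:Z)%Z * n%:Z) = 0.
  by rewrite mulrzA mulrzAC -[R x *~ n%:Z]/(R x *+ n) yn mul0rz.
move: e; rewrite {1}(divz_eq a0 n%:Z) mulrzDr z add0r.
case: (a0 %% n%:Z)%Z => [[|d]|d] ed dn hge.
- reflexivity.
- exfalso; apply: nB; exists d.+1.
    move: dn; rewrite ltz_nat; exact.
  split; first exact: Sx. split; first by []. rewrite raddfMn; exact: ed.
- by exfalso; move: hge; rewrite NegzE oppr_ge0.
Qed.
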